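(* It is not true that $\lim_{n\to\infty} M(n+1)/M(n) = 2$.
   Context: For a positive integer $n$, $M(n)$ denotes the number of permutations $(t_1,\dots,t_n)$ of $\{1,2,\ldots,n\}$ that do not contain a 3-term arithmetic progression as a subsequence. Here a sequence contains a 3-term arithmetic progression as a subsequence if there are indices $i<j<k$ with $t_j - t_i = t_k - t_j \neq 0$; the common difference may be positive or negative. *)

(* Defs.v *)
From HB Require Import structures.
From mathcomp Require Import all_boot all_order all_algebra.
Set Implicit Arguments. Unset Strict Implicit. Unset Printing Implicit Defensive.
Import GRing.Theory Num.Theory.

Definition has3AP (s : seq nat) : bool :=
  [exists i : 'I_(size s), exists j : 'I_(size s), exists k : 'I_(size s),
     [&& (i < j)%N, (j < k)%N,
         ((nth 0%N s j)%:Z - (nth 0%N s i)%:Z == (nth 0%N s k)%:Z - (nth 0%N s j)%:Z)%R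
       & ((nth 0%N s j)%:Z - (nth 0%N s i)%:Z != 0)%R]].

(* M n = number of permutations of {1,...,n} with no 3-term AP subsequence.
   [permutations s] is the duplicate-free list of all permutations of s. *)
Definition M (n : nat) : nat :=
  count (fun s => ~~ has3AP s) (permutations (iota 1 n)).

(* Main.v *)
Require Import Defs.
From Stdlib Require Import Reals.
Open Scope R_scope.
From Stdlib Require Import Lra Lia.


Fixpoint nk (k : nat) : nat := match k with O => 4%nat | S k => (nk k + nk k)%nat end.

Lemma nk_eq k : nk k = (4 * Nat.pow 2 k)%nat.
Proof. induction k; simpl nk; [reflexivity|]. rewrite IHk. simpl Nat.pow. lia. Qed.

Lemma pow2_ge k : (k <= Nat.pow 2 k)%nat.
Proof. induction k; simpl Nat.pow; [lia|]. pose proof (Nat.pow_nonzero 2 k). lia. Qed.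

Lemma nk_ge k : (k <= nk k)%nat.
Proof. rewrite nk_eq. pose proof (pow2_ge k). lia. Qed.

Lemma abstractR (f : nat -> nat) : f 4%nat = 10%nat ->
  (forall n, (0 < n)%nat -> (2 * (f n * f n) <= f (n + n))%nat) ->
  ~ Un_cv (fun n => INR (f (S n)) / INR (f n)) 2.
Proof.
intros h4 hd H.
assert (Hlow : forall k, 20 ^ (Nat.pow 2 k) <= 2 * INR (f (nk k))).
{ induction k.
  - simpl. rewrite h4. simpl. lra.
  - simpl nk. simpl Nat.pow.
    assert (hp : (0 < nk k)%nat) by (rewrite nk_eq; pose proof (Nat.pow_nonzero 2 k); lia).
    pose proof (le_INR _ _ (hd _ hp)) as hh.
    rewrite !mult_INR in hh. simpl INR in hh.
    replace (Nat.pow 2 k + (Nat.pow 2 k + 0))%nat with (Nat.pow 2 k * 2)%nat by lia.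
    rewrite pow_mult.
    assert (0 <= 20 ^ Nat.pow 2 k) by (apply pow_le; lra).
    assert (0 <= INR (f (nk k))) by apply pos_INR.
    simpl. nra. }
destruct (H (1/10)) as [N HN]; [lra|].
assert (Hstep : forall n, (n >= N)%nat -> INR (f (S n)) <= 21/10 * INR (f n)).
{ intros n hn. specialize (HN n hn). unfold R_dist in HN.
  apply Rabs_def2 in HN. destruct HN as [H1 H2].
  pose proof (pos_INR (f n)) as hb. pose proof (pos_INR (f (S n))) as ha.
  destruct (Req_dec (INR (f n)) 0) as [e|e].
  - rewrite e in H1, H2. unfold Rdiv in H2. rewrite Rinv_0 in H2. lra.
  - assert (hb' : 0 < INR (f n)) by lra.
    assert (INR (f (S n)) = INR (f (S n)) / INR (f n) * INR (f n)) by (field; lra).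
    rewrite H0. apply Rmult_le_compat_r; lra. }
assert (Hup : forall m, INR (f (N + m)%nat) <= (21/10) ^ m * INR (f N)).
{ induction m.
  - rewrite Nat.add_0_r. simpl. lra.
  - rewrite Nat.add_succ_r. simpl.
    pose proof (Hstep (N + m)%nat ltac:(lia)).
    nra. }
set (C := INR (f N)).
assert (hC : 0 <= C) by apply pos_INR.
set (q := 20 / (21/10)^4).
assert (hq : 0 < q - 1) by (unfold q; simpl; lra).
destruct (INR_archimed (q - 1) (2 * C) hq) as [k0 hk0].
set (k := Nat.max k0 N).
assert (hkN : (N <= k)%nat) by (unfold k; lia).
assert (hk : (N <= nk k)%nat) by (pose proof (nk_ge k); lia).
pose proof (Hlow k) as L.
pose proof (Hup (nk k - N)%nat) as U.
replace (N + (nk k - N))%nat with (nk k) in U by lia.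
assert (U2 : (21/10) ^ (nk k - N) <= (21/10) ^ nk k) by (apply Rle_pow; [lra|lia]).
assert (hpos : 0 <= (21/10) ^ (nk k - N)) by (apply pow_le; lra).
assert (U3 : INR (f (nk k)) <= (21/10) ^ nk k * C) by (unfold C in *; nra).
assert (E : (21/10) ^ nk k = ((21/10)^4) ^ (Nat.pow 2 k)) by (rewrite nk_eq, pow_mult; reflexivity).
rewrite E in U3.
set (m := Nat.pow 2 k) in *.
set (r := (21/10)^4) in *.
assert (hr : 0 < r) by (unfold r; simpl; lra).
assert (e20 : 20 = r * q) by (unfold q; field; lra).
rewrite e20, Rpow_mult_distr in L.
assert (hrm : 0 < r ^ m) by (apply pow_lt; lra).

assert (hqm : q ^ m <= 2 * C) by (apply (Rmult_le_reg_l (r ^ m)); [exact hrm|]; lra).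
pose proof (poly m (q - 1) hq) as B.
replace (1 + (q - 1)) with q in B by ring.
assert (hkm : (k0 <= m)%nat) by (pose proof (pow2_ge k); unfold m, k in *; lia).
apply le_INR in hkm.
nra.
Qed.


Module Comb.
From HB Require Import structures.
From mathcomp Require Import all_boot all_order all_algebra.
Set Implicit Arguments. Unset Strict Implicit.
Import GRing.Theory Num.Theory.
Local Close Scope R_scope.
Local Open Scope nat_scope.

Lemma keyZ (a b c : nat) : ((b%:Z - a%:Z == c%:Z - b%:Z)%R = (a + c == b + b)%N).
Proof.
rewrite eq_sym subr_eq addrAC eq_sym subr_eq -!PoszD eqz_nat addnC.
by rewrite eq_sym.
Qed.
Lemma keyZ2 (a b : nat) : ((b%:Z - a%:Z != 0)%R = (a != b)).
Proof. by rewrite subr_eq0 eqz_nat eq_sym. Qed.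

Definition Q (s : seq nat) := exists i j k, [/\ i < j, j < k, k < size s,
  nth 0 s i + nth 0 s k = nth 0 s j + nth 0 s j & nth 0 s i <> nth 0 s j].

Lemma has3AP_Q s : has3AP s <-> Q s.
Proof.
split.
- case/existsP=> i /existsP [j /existsP [k /and4P [hij hjk he hn]]].
  exists i, j, k; split => //.
  + by move: he; rewrite keyZ => /eqP.
  + by move: hn; rewrite keyZ2 => /eqP.
- case=> i [j [k [hij hjk hk he hn]]].
  have hj : j < size s by apply: ltn_trans hk.
  have hi : i < size s by apply: ltn_trans hj.
  apply/existsP; exists (Ordinal hi); apply/existsP; exists (Ordinal hj).
  apply/existsP; exists (Ordinal hk); apply/and4P; split => //=.
  + by rewrite keyZ he.
  + by rewrite keyZ2; apply/eqP.
Qed.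

Definition apb (s : seq nat) : bool :=
  has (fun i => has (fun j => has (fun k =>
    [&& i < j, j < k, nth 0 s i + nth 0 s k == nth 0 s j + nth 0 s j
      & nth 0 s i != nth 0 s j]) (iota 0 (size s))) (iota 0 (size s))) (iota 0 (size s)).

Lemma apb_Q s : apb s <-> Q s.
Proof.
split.
- case/hasP=> i _ /hasP [j _ /hasP [k hk /and4P [hij hjk /eqP he /eqP hn]]].
  exists i, j, k; split => //. by move: hk; rewrite mem_iota.
- case=> i [j [k [hij hjk hk he hn]]].
  have hj : j < size s by apply: ltn_trans hk.
  have hi : i < size s by apply: ltn_trans hj.
  apply/hasP; exists i; first by rewrite mem_iota.
  apply/hasP; exists j; first by rewrite mem_iota.
  apply/hasP; exists k; first by rewrite mem_iota.
  by rewrite hij hjk he eqxx; apply/eqP.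
Qed.

Lemma has3AP_apb s : has3AP s = apb s.
Proof.
apply/idP/idP => h.
- by apply/apb_Q; apply/has3AP_Q.
- by apply/has3AP_Q; apply/apb_Q.
Qed.

Lemma M4 : M 4 = 10.
Proof.
rewrite /M (eq_count (a2 := fun s => ~~ apb s)); last by move=> s; rewrite has3AP_apb.
by vm_compute.
Qed.

Lemma catQ u v b : all (fun x => odd x == b) u -> all (fun x => odd x == ~~ b) v ->
  Q (u ++ v) -> Q u \/ Q v.
Proof.
move=> /allP hu /allP hv [i [j [k [hij hjk hk he hn]]]].
rewrite !nth_cat in he hn.
case: (ltnP k (size u)) => hku.
- have hj : j < size u by apply: ltn_trans hku.
  have hi : i < size u by apply: ltn_trans hj.
  rewrite hi hj hku in he hn; left; exists i, j, k; split => //.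
- have hiu : size u <= i.
    rewrite leqNgt; apply/negP => hi.
    rewrite hi ltnNge hku /= in he.
    have oi : odd (nth 0 u i) = b by apply/eqP; apply: hu; apply: mem_nth.
    have ok : odd (nth 0 v (k - size u)) = ~~ b.
      apply/eqP; apply: hv; apply: mem_nth.
      by rewrite -(ltn_add2l (size u)) subnKC // -size_cat.
    have := congr1 odd he.
    by case: (j < size u); rewrite oddD oi ok ?addnn ?odd_double ?oddD; case: (b); case: (odd _).
  have hju : size u <= j by apply: leq_trans hiu (ltnW hij).
  have e1 : (i < size u) = false by rewrite ltnNge hiu.
  have e2 : (j < size u) = false by rewrite ltnNge hju.
  have e3 : (k < size u) = false by rewrite ltnNge hku.
  rewrite e1 e2 e3 in he hn; right.
  exists (i - size u), (j - size u), (k - size u); split => //.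
  + by apply: ltn_sub2r => //; apply: leq_ltn_trans hiu hij.
  + by apply: ltn_sub2r => //; apply: leq_ltn_trans hju hjk.
  + by rewrite -(ltn_add2l (size u)) subnKC // -size_cat.
Qed.

Definition h (x : nat) := (x.*2).-1.
Definition g (x : nat) := x.*2.

Lemma hK : cancel h (fun y => (y.+1)./2).
Proof. case=> [|x] //. rewrite /h doubleS /= -[in RHS](doubleK x). by []. Qed.

Lemma Qmap_h s : all (fun x => 0 < x) s -> Q (map h s) -> Q s.
Proof.
move=> /allP hs [i [j [k [hij hjk hk he hn]]]].
rewrite size_map in hk.
have hj : j < size s by apply: ltn_trans hk.
have hi : i < size s by apply: ltn_trans hj.
rewrite !(nth_map 0) // in he hn.
exists i, j, k; split => //.
- have hp : forall x, 0 < x -> (h x).+1 = x.*2.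
    by move=> x hx; rewrite /h prednK // double_gt0.
  have e2 : (h (nth 0 s i)).+1 + (h (nth 0 s k)).+1 =
            (h (nth 0 s j)).+1 + (h (nth 0 s j)).+1 by rewrite !addSn !addnS he.
  rewrite !hp ?hs ?mem_nth // -!doubleD in e2.
  exact: double_inj e2.
- by move=> e; apply: hn; rewrite e.
Qed.

Lemma Qmap_g s : Q (map g s) -> Q s.
Proof.
move=> [i [j [k [hij hjk hk he hn]]]].
rewrite size_map in hk.
have hj : j < size s by apply: ltn_trans hk.
have hi : i < size s by apply: ltn_trans hj.
rewrite !(nth_map 0) // /g -!doubleD in he hn.
exists i, j, k; split => //.
- exact: double_inj he.
- by move=> e; apply: hn; rewrite e.
Qed.

Lemma perm_hg n : perm_eq (map h (iota 1 n) ++ map g (iota 1 n)) (iota 1 n.*2).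
Proof.
elim: n => [|n IH] //.
have e1 : iota 1 n.+1 = iota 1 n ++ [:: n.+1] by rewrite -[n.+1]addn1 iotaD /= add1n addn1.
have e2 : iota 1 n.+1.*2 = iota 1 n.*2 ++ [:: h n.+1; g n.+1].
  rewrite doubleS -[n.*2.+2]addn2 iotaD /h /g doubleS /=; congr (_ ++ _).
rewrite e1 e2 !map_cat.
apply: (perm_trans _ (perm_cat IH (perm_refl _))).
rewrite -!catA perm_cat2l -cat1s perm_catCA.
by [].
Qed.


Definition A n := filter (fun s => ~~ has3AP s) (permutations (iota 1 n)).

Lemma sizeA n : size (A n) = M n.
Proof. by rewrite /A size_filter. Qed.

Lemma memA n a : (a \in A n) = perm_eq a (iota 1 n) && ~~ has3AP a.
Proof. by rewrite /A mem_filter mem_permutations andbC. Qed.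

Lemma A_size n a : a \in A n -> size a = n.
Proof. by rewrite memA => /andP [/perm_size -> _]; rewrite size_iota. Qed.

Lemma A_pos n a : a \in A n -> all (fun x => 0 < x) a.
Proof.
rewrite memA => /andP [hp _]; apply/allP => x hx.
by move: hx; rewrite (perm_mem hp) mem_iota => /andP [].
Qed.

Lemma odd_h x : 0 < x -> odd (h x).
Proof. by case: x => // x _; rewrite /h doubleS /= odd_double. Qed.

Lemma bound_sub n (L : seq (seq nat)) : uniq L -> {subset L <= A n} -> size L <= M n.
Proof. by move=> hu hs; rewrite -sizeA; apply: uniq_leq_size. Qed.

Lemma hall a : all (fun x => 0 < x) a -> all (fun x => odd x == true) (map h a).
Proof. move=> /allP ha; apply/allP => y /mapP [x hx ->]; by rewrite odd_h // ha. Qed.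

Lemma gall b : all (fun x => odd x == ~~ true) (map g b).
Proof. apply/allP => y /mapP [x hx ->]; by rewrite /g odd_double. Qed.

Lemma gall' b : all (fun x => odd x == false) (map g b).
Proof. exact: gall. Qed.

Lemma hall' a : all (fun x => 0 < x) a -> all (fun x => odd x == ~~ false) (map h a).
Proof. exact: hall. Qed.

Lemma noAP1 n a b : a \in A n -> b \in A n -> ~~ has3AP (map h a ++ map g b).
Proof.
move=> ha hb; apply/negP => /has3AP_Q /(catQ (hall (A_pos ha)) (gall b)) [].
- move/(Qmap_h (A_pos ha))/has3AP_Q; apply/negP; by move: ha; rewrite memA => /andP [].
- move/Qmap_g/has3AP_Q; apply/negP; by move: hb; rewrite memA => /andP [].
Qed.

Lemma noAP2 n a b : a \in A n -> b \in A n -> ~~ has3AP (map g b ++ map h a).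
Proof.
move=> ha hb; apply/negP => /has3AP_Q /(catQ (gall' b) (hall' (A_pos ha))) [].
- move/Qmap_g/has3AP_Q; apply/negP; by move: hb; rewrite memA => /andP [].
- move/(Qmap_h (A_pos ha))/has3AP_Q; apply/negP; by move: ha; rewrite memA => /andP [].
Qed.

Lemma perm1 n a b : a \in A n -> b \in A n -> perm_eq (map h a ++ map g b) (iota 1 n.*2).
Proof.
rewrite !memA => /andP [pa _] /andP [pb _].
apply: perm_trans (perm_hg n).
by apply: perm_cat; apply: perm_map.
Qed.

Lemma perm2 n a b : a \in A n -> b \in A n -> perm_eq (map g b ++ map h a) (iota 1 n.*2).
Proof. by move=> ha hb; rewrite perm_catC; apply: perm1. Qed.

Lemma Mdouble n : 0 < n -> 2 * (M n * M n) <= M n.*2.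
Proof.
move=> n0.
set L1 := [seq map h a ++ map g b | a <- A n, b <- A n].
set L2 := [seq map g b ++ map h a | a <- A n, b <- A n].
have uA : uniq (A n) by apply: filter_uniq; apply: permutations_uniq.
have -> : 2 * (M n * M n) = size (L1 ++ L2).
  by rewrite size_cat !size_allpairs sizeA mul2n addnn.
apply: bound_sub.
- rewrite cat_uniq; apply/and3P; split.
  + apply: allpairs_uniq => // [[a b]] [a' b'] /allpairsP [[x y] [hx hy /= [-> ->]]]
      /allpairsP [[x' y'] [hx' hy' /= [-> ->]]] /= /eqP.
    rewrite eqseq_cat; last by rewrite !size_map (A_size hx) (A_size hx').
    by case/andP => /eqP /(inj_map (can_inj hK)) -> /eqP /(inj_map double_inj) ->.
  + apply/hasPn => z /allpairsP [[a b] [ha hb /= ->]].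
    apply/negP => /allpairsP [[a' b'] [ha' hb' /= e]].
    have := congr1 (fun s => odd (nth 0 s 0)) e.
    rewrite !nth_cat !size_map (A_size hb) (A_size ha') n0.
    rewrite (nth_map 0); last by rewrite (A_size hb).
    rewrite (nth_map 0); last by rewrite (A_size ha').
    rewrite /g odd_double odd_h //.
    have := allP (A_pos ha'); apply; apply: mem_nth; by rewrite (A_size ha').
  + apply: allpairs_uniq => // [[a b]] [a' b'] /allpairsP [[x y] [hx hy /= [-> ->]]]
      /allpairsP [[x' y'] [hx' hy' /= [-> ->]]] /= /eqP.
    rewrite eqseq_cat; last by rewrite !size_map (A_size hy) (A_size hy').
    by case/andP => /eqP /(inj_map double_inj) -> /eqP /(inj_map (can_inj hK)) ->.
- move=> z; rewrite mem_cat => /orP [] /allpairsP [[a b] [ha hb /= ->]]; rewrite memA.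
  + by rewrite perm1 // (noAP1 ha hb).
  + by rewrite perm2 // (noAP2 ha hb).
Qed.

Lemma M4' : M 4 = 10%coq_nat.
Proof. exact: M4. Qed.

Lemma Md' : forall n, lt 0 n -> le (Nat.mul 2 (Nat.mul (M n) (M n))) (M (Nat.add n n)).
Proof. move=> n /ltP h; apply/leP; rewrite multE plusE addnn; exact: Mdouble. Qed.
End Comb.

Theorem mainTheorem2 :
  ~ Un_cv (fun n : nat => INR (M (S n)) / INR (M n)) 2.
Proof. exact (abstractR M Comb.M4' Comb.Md'). Qed.
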